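(* Let $x_1<\dots<x_M$ be nodes of a periodic 1D grid on $[0,L)$, extended by $x_{i+M}=x_i+L$, and let $p\in\mathbb N$. For each $i$ let $\ell_{i,\alpha}$, $\alpha=-p,\dots,p+1$, be the $2p+2$ Lagrange polynomials (of degree $2p+1$) on the nodes $x_{i-p},\dots,x_{i+p+1}$, i.e. $\ell_{i,\alpha}(x_{i+\gamma})=\delta_{\alpha,\gamma}$ for $\gamma=-p,\dots,p+1$, and define the $2p+1$ polynomials $\hbar_{i,\alpha}(x)=\sum_{\beta=\alpha+1}^{p+1}\ell'_{i,\beta}(x)$, $\alpha=-p,\dots,p$. For periodic arrays $\mathbf f=(f_i)$, $\mathbf g=(g_i)$ define, for $x\in[x_i,x_{i+1})$, $$(i_0\mathbf f)(x)=\sum_{\alpha=-p}^{p+1}f_{i+\alpha}\ell_{i,\alpha}(x),\qquad (i_1\mathbf g)(x)=\sum_{\alpha=-p}^{p}g_{i+\alpha}\hbar_{i,\alpha}(x).$$ Then: (a) $r_0\, i_0\, r_0(\phi)=r_0(\phi)$ for all $L$-periodic $\phi\in H^1$; (b) $r_1\, i_1\, r_1(\psi)=r_1(\psi)$ for all $L$-periodic $\psi\in L^2$; (c) $\frac{d}{dx}(i_0\mathbf f)(x)=(i_1\,\mathbb d\mathbf f)(x)$ for every array $\mathbf f$ (on each cell $[x_i,x_{i+1})$).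
   Context: $r_0$ is the point-value reduction $r_0(\phi)_i=\phi(x_i)$; $r_1$ is the cell-integral reduction $r_1(\psi)_i=\int_{x_i}^{x_{i+1}}\psi(x)\,dx$; $\mathbb d$ is the periodic forward difference $(\mathbb d\mathbf f)_i=f_{i+1}-f_i$. Indices of arrays are taken modulo $M$. *)

(* Defs.v *)
From HB Require Import structures.
From mathcomp Require Import all_boot all_order all_algebra.
From mathcomp Require Import all_classical all_reals all_analysis.
Set Implicit Arguments. Unset Strict Implicit. Unset Printing Implicit Defensive.
Import Order.TTheory GRing.Theory Num.Theory.
Local Open Scope classical_set_scope.
Local Open Scope ring_scope.

Section Defs.
Variable R : realType.

(* offset alpha = k - p for k in 0 .. 2p+1 *)
Definition off (p k : nat) : int := k%:Z - p%:Z.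

Definition lag (x : int -> R) (p : nat) (i : int) (k : nat) : {poly R} :=
  \prod_(j < (2 * p + 2)%N | j != k :> nat)
     (('X - (x (i + off p j))%:P) * ((x (i + off p k) - x (i + off p j))^-1)%:P).

Definition hbar (x : int -> R) (p : nat) (i : int) (k : nat) : {poly R} :=
  \sum_(k.+1 <= j < (2 * p + 2)%N) (lag x p i j)^`().

Definition cell (x : int -> R) (y : R) : int :=
  xget 0%Z [set i : int | x i <= y < x (i + 1)].

Definition i0 (x : int -> R) (p : nat) (f : int -> R) (y : R) : R :=
  let i := cell x y in
  \sum_(k < (2 * p + 2)%N) f (i + off p k) * (lag x p i k).[y].

Definition i1 (x : int -> R) (p : nat) (g : int -> R) (y : R) : R :=
  let i := cell x y in
  \sum_(k < (2 * p + 1)%N) g (i + off p k) * (hbar x p i k).[y].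

Definition i0_cell (x : int -> R) (p : nat) (f : int -> R) (i : int) (y : R) : R :=
  \sum_(k < (2 * p + 2)%N) f (i + off p k) * (lag x p i k).[y].

Definition r0 (x : int -> R) (phi : R -> R) : int -> R := fun i => phi (x i).
Definition r1 (x : int -> R) (psi : R -> R) : int -> R :=
  fun i => Rintegral lebesgue_measure `[x i, x (i + 1)] psi.
Definition dd (f : int -> R) : int -> R := fun i => f (i + 1) - f i.

Definition periodic_array (M : nat) (f : int -> R) := forall i, f (i + M%:Z) = f i.
Definition periodic_fun (L : R) (phi : R -> R) := forall t, phi (t + L) = phi t.

Definition periodic_grid (M : nat) (L : R) (x : int -> R) :=
  [/\ (0 < M)%N, (forall i, x i < x (i + 1)), (forall i, x (i + M%:Z) = x i + L),
      0 <= x 1 & x M%:Z < L].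

Definition L2loc (psi : R -> R) :=
  measurable_fun setT psi /\
  forall a b, lebesgue_measure.-integrable `[a, b] (fun t => ((psi t) ^+ 2)%:E).

(* phi in H^1_loc: phi is (the continuous representative of) a function with a
   weak derivative g in L^2_loc, i.e. phi b - phi a = int_a^b g *)
Definition H1loc (phi : R -> R) :=
  L2loc phi /\
  exists g : R -> R, L2loc g /\
    forall a b, a <= b -> phi b - phi a = Rintegral lebesgue_measure `[a, b] g.

End Defs.

(* Main.v *)
Require Import Defs.
From HB Require Import structures.
From mathcomp Require Import all_boot all_order all_algebra.
From mathcomp Require Import all_classical all_reals all_analysis.
From mathcomp Require Import zify.
Import Order.TTheory GRing.Theory Num.Theory.
Local Open Scope classical_set_scope.
Local Open Scope ring_scope.

From mathcomp Require Import ring.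

Section Aux.
Variable R : realType.
Variable x : int -> R.
Hypothesis hinc : forall i, x i < x (i + 1).

Lemma x_ltS (i : int) (n : nat) : x i < x (i + (n.+1)%:Z).
Proof.
elim: n => [|n IH]; first exact: hinc.
apply: lt_trans IH _.
have -> : i + (n.+2)%:Z = (i + (n.+1)%:Z) + 1 by lia.
exact: hinc.
Qed.

Lemma x_lt (i j : int) : (i < j)%R -> x i < x j.
Proof.
move=> ij.
have [n hn] : exists n : nat, j = i + (n.+1)%:Z.
  exists (absz (j - i - 1)%R); lia.
rewrite hn; exact: x_ltS.
Qed.

Arguments x_lt {i j}.

Lemma x_le (i j : int) : (i <= j)%R -> x i <= x j.
Proof.
rewrite le_eqVlt => /orP[/eqP->//|/x_lt/ltW//].
Qed.

Arguments x_le {i j}.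

Lemma x_inj (i j : int) : x i = x j -> i = j.
Proof.
move=> e; case: (ltgtP i j) => // h; move: (x_lt h); rewrite e ltxx //.
Qed.

Lemma cellE (i : int) (y : R) : x i <= y < x (i + 1) -> cell x y = i.
Proof.
move=> hy; rewrite /cell; apply: xget_unique => // j /andP[h1 h2].
case/andP: hy => h3 h4.
case: (ltgtP j i) => // h.
- have : (j + 1 <= i)%R by lia.
  move/x_le => h5. have := le_lt_trans h3 h2. rewrite ltNge h5 //.
- have : (i + 1 <= j)%R by lia.
  move/x_le => h5. have := le_lt_trans h1 h4. rewrite ltNge h5 //.
Qed.

End Aux.

Section Lag.
Variable R : realType.
Variable x : int -> R.
Hypothesis hinc : forall i, x i < x (i + 1).
Variables (p : nat) (i : int).

Let n := (2 * p + 2)%N.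
Let node (m : nat) := x (i + off p m).

Lemma node_inj m k : node m = node k -> m = k.
Proof. by move=> /(@x_inj R x hinc _ _); rewrite /off; lia. Qed.

Lemma lag_node k m : (k < n)%N -> (m < n)%N ->
  (lag x p i k).[node m] = (k == m)%:R.
Proof.
move=> hk hm; rewrite /lag horner_prod.
case: eqP => [<-|/eqP km].
  apply: big1 => j jk; rewrite hornerM hornerXsubC hornerC mulfV //.
  rewrite subr_eq0; apply/eqP => /node_inj e; move: jk; rewrite e eqxx //.
rewrite (bigD1 (Ordinal hm)) /=; last by rewrite eq_sym.
by rewrite hornerM hornerXsubC subrr !mul0r.
Qed.

Lemma size_lag k : (k < n)%N -> (size (lag x p i k) <= n)%N.
Proof.
move=> hk; rewrite /lag.
apply: leq_trans (size_poly_prod_leq _ _) _.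
set P := (X in #|X|).
have cP : #|P| = n.-1.
  rewrite -(card_ord n) -(cardC1 (Ordinal hk)); apply: eq_card => j.
  by rewrite !inE /P /=.
have : (\sum_(j < n | P j) size (('X - (x (i + off p j))%:P) *
           ((x (i + off p k) - x (i + off p j))^-1)%:P)%R <= \sum_(j < n | P j) 2)%N.
  apply: leq_sum => j _; apply: leq_trans (size_polyMleq _ _) _.
  rewrite size_XsubC; have := size_polyC_leq1 (x (i + off p k) - x (i + off p j))^-1.
  by move=> h; rewrite add2n /=; apply: h.
rewrite sum_nat_const cP /n => h.
move: h; set s := (\sum_(_ < _ | _) _)%N. lia.
Qed.

Lemma sum_lag : \sum_(k < n) lag x p i k = 1.
Proof.
apply/eqP; rewrite -subr_eq0; apply/eqP.
set D := _ - 1.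
apply: (@roots_geq_poly_eq0 _ D [seq node m | m <- iota 0 n]).
- apply/allP => y /mapP[m]; rewrite mem_iota add0n => /andP[_ hm] ->.
  rewrite /root /D hornerD hornerN hornerC horner_sum.
  rewrite (bigD1 (Ordinal hm)) //= lag_node // eqxx big1 ?addr0 ?subrr //.
  move=> j /eqP jm; rewrite lag_node //; case: eqP => // e; exfalso; apply: jm.
  by apply: val_inj.
- rewrite map_inj_in_uniq ?iota_uniq // => a b _ _; exact: node_inj.
- rewrite size_map size_iota /D.
  apply: leq_trans (size_polyD _ _) _; rewrite size_polyN size_polyC geq_max.
  apply/andP; split; last by rewrite oner_neq0 /n; lia.
  apply: (big_ind (fun q : {poly R} => (size q <= n)%N)).
  + by rewrite size_poly0.
  + move=> a b ha hb; apply: leq_trans (size_polyD _ _) _; rewrite geq_max ha hb //.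
  + move=> j _; exact: size_lag.
Qed.

End Lag.

Lemma sbp (S : comNzRingType) (F a : nat -> S) m :
 \sum_(0 <= k < m) (F k.+1 - F k) * \sum_(k.+1 <= j < m.+1) a j
 = \sum_(0 <= j < m.+1) F j * a j - F 0%N * \sum_(0 <= j < m.+1) a j.
Proof.
elim: m => [|m IH].
  by rewrite big_geq // !big_nat1 subrr.
rewrite big_nat_recr //= big_nat1.
have e : \sum_(0<=k<m) (F k.+1 - F k) * \sum_(k.+1 <= j < m.+2) a j =
  \sum_(0<=k<m) (F k.+1 - F k) * \sum_(k.+1 <= j < m.+1) a j +
  \sum_(0<=k<m)(F k.+1 - F k) * a m.+1.
  rewrite -big_split; apply: eq_big_nat => k /andP[_ hk].
  rewrite (big_nat_recr m.+1) /=; [by rewrite mulrDr | lia].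
rewrite e IH -mulr_suml telescope_sumr //.
rewrite (big_nat_recr m.+1 _ (fun j => F j * a j)) //= (big_nat_recr m.+1 _ a) //=.
ring.
Qed.

Section PC.
Variable R : realType.
Variable x : int -> R.
Hypothesis hinc : forall i, x i < x (i + 1).
Variables (p : nat).

Definition P0 (f : int -> R) (i : int) : {poly R} :=
  \sum_(k < (2 * p + 2)%N) f (i + off p k) *: lag x p i k.

Lemma i0_cellE f i : i0_cell x p f i = horner (P0 f i).
Proof.
apply/funext => z; rewrite /i0_cell /P0 horner_sum; apply: eq_bigr => k _.
by rewrite hornerZ.
Qed.

Lemma P0_deriv f i y : x i <= y < x (i + 1) ->
  (P0 f i)^`().[y] = i1 x p (dd f) y.
Proof.
move=> hy; rewrite /i1 (@cellE R x hinc _ _ hy).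
have n2 : (2 * p + 2 = (2 * p + 1).+1)%N by lia.
set F := fun k : nat => f (i + off p k).
set a := fun j : nat => (lag x p i j)^`().[y].
have -> : \sum_(k < (2 * p + 1)%N) dd f (i + off p k) * (hbar x p i k).[y] =
   \sum_(0 <= k < (2 * p + 1)%N) (F k.+1 - F k) *
       \sum_(k.+1 <= j < (2 * p + 1).+1) a j.
  rewrite big_mkord; apply: eq_bigr => k _.
  rewrite /dd /hbar horner_sum n2 /F; congr ((_ - _) * _).
  by congr f; rewrite /off; lia.
rewrite sbp.
have -> : \sum_(0 <= j < (2 * p + 1).+1) a j = 0.
  rewrite -n2 big_mkord /a -horner_sum -raddf_sum /=.
  by rewrite sum_lag // derivC horner0.
rewrite mulr0 subr0 -n2 big_mkord /P0 raddf_sum horner_sum.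
apply: eq_bigr => k _; change ((f (i + off p k) *: lag x p i k)^`().[y] = F k * a k).
by rewrite derivZ hornerZ.
Qed.

Lemma part_c f i y : x i <= y < x (i + 1) ->
  is_derive y 1 (i0_cell x p f i) (i1 x p (dd f) y) /\
  (x i < y -> is_derive y 1 (i0 x p f) (i1 x p (dd f) y)).
Proof.
move=> hy.
have D : is_derive y 1 (i0_cell x p f i) (i1 x p (dd f) y).
  rewrite i0_cellE -(@P0_deriv f i y hy); exact: is_derive_poly.
split => // hxy.
apply: near_eq_is_derive D.
have yin : y \in `]x i, x (i + 1)[ by rewrite in_itv /= hxy; case/andP: hy.
near=> z.
have : z \in `]x i, x (i + 1)[ by near: z; exact: near_in_itvoo.
rewrite in_itv /= => /andP[h1 h2].
rewrite /i0 (@cellE R x hinc i z); last by rewrite (ltW h1) h2.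
by [].
Unshelve. all: by end_near.
Qed.

End PC.

Section PAB.
Variable R : realType.
Variable x : int -> R.
Hypothesis hinc : forall i, x i < x (i + 1).
Variables (p : nat).

Lemma lagE (i : int) k m : (k < 2 * p + 2)%N -> (m < 2 * p + 2)%N ->
  (lag x p i k).[x (i + off p m)] = (k == m)%:R.
Proof. exact: (@lag_node R x hinc p i k m). Qed.

Lemma part_a (phi : R -> R) : r0 x (i0 x p (r0 x phi)) = r0 x phi.
Proof.
apply/funext => j; rewrite /r0 /i0.
rewrite (@cellE R x hinc j); last by rewrite lexx hinc.
have hp : (p < 2 * p + 2)%N by lia.
have ej : x j = x (j + off p p) by rewrite /off subrr addr0.
rewrite (bigD1 (Ordinal hp)) //= big1 ?addr0.
  have H : forall k : nat, k = p ->
      phi (x (j + off p k)) * (lag x p j k).[x j] = phi (x j).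
    by move=> k ->; rewrite ej lagE // eqxx mulr1.
  exact: H.
move=> k /eqP kp; rewrite ej lagE //; case: eqP => [e|_]; last by rewrite mulr0.
by exfalso; apply: kp; apply: val_inj.
Qed.


Lemma sum_ind (s n c : nat) :
  \sum_(s <= l < n) ((l == c)%:R : R) = (s <= c < n)%:R.
Proof.
elim: n => [|n IH]; first by rewrite big_geq // andbF.
case: (leqP s n) => sn.
  rewrite big_nat_recr //= IH.
  case: (ltngtP c n) => h.
  - by rewrite ltnS (ltnW h) !andbT addr0.
  - by rewrite andbF addr0 ltnS (leqNgt c n) h andbF.
  - by rewrite andbF add0r h ltnSn sn.
rewrite big_geq //.
by have -> : (s <= c < n.+1)%N = false by apply/idP; lia.
Qed.

Definition Hk (j : int) (k : nat) : {poly R} :=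
  \sum_(k.+1 <= l < (2 * p + 2)%N) lag x p j l.
Definition Q (g : int -> R) (j : int) : {poly R} :=
  \sum_(k < (2 * p + 1)%N) g (j + off p k) *: Hk j k.

Lemma Q_deriv g j z : (Q g j)^`().[z] =
  \sum_(k < (2 * p + 1)%N) g (j + off p k) * (hbar x p j k).[z].
Proof.
rewrite /Q raddf_sum horner_sum; apply: eq_bigr => k _.
change ((g (j + off p k) *: Hk j k)^`().[z] = g (j + off p k) * (hbar x p j k).[z]).
by rewrite derivZ hornerZ /Hk /hbar raddf_sum.
Qed.

Lemma Q_eval g j m : (m < 2 * p + 2)%N -> (Q g j).[x (j + off p m)] =
  \sum_(k < (2 * p + 1)%N) g (j + off p k) * (k.+1 <= m < 2 * p + 2)%:R.
Proof.
move=> hm; rewrite /Q horner_sum; apply: eq_bigr => k _.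
rewrite hornerZ /Hk horner_sum; congr (_ * _).
rewrite -sum_ind; apply: eq_big_nat => l /andP[_ hl].
by rewrite lagE.
Qed.

Lemma Q_diff g j : (Q g j).[x (j + 1)] - (Q g j).[x j] = g j.
Proof.
have e1 : x (j + 1) = x (j + off p p.+1) by congr x; rewrite /off; lia.
have e0 : x j = x (j + off p p) by congr x; rewrite /off; lia.
rewrite e1 e0 !Q_eval; try lia.
rewrite -sumrB.
have hp : (p < 2 * p + 1)%N by lia.
rewrite (bigD1 (Ordinal hp)) //= big1 ?addr0.
  have -> : (p.+1 <= p.+1 < 2 * p + 2)%N = true by apply/idP; lia.
  have -> : (p.+1 <= p < 2 * p + 2)%N = false by apply/idP; lia.
  by rewrite mulr1 mulr0 subr0 /off subrr addr0.
move=> k /eqP kp.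
have kp' : (k : nat) <> p by move=> e; apply: kp; apply: val_inj.
have [h|h] : (k < p)%N \/ (p < k)%N by lia.
- have -> : (k.+1 <= p.+1 < 2 * p + 2)%N = true by apply/idP; lia.
  have -> : (k.+1 <= p < 2 * p + 2)%N = true by apply/idP; lia.
  by rewrite subrr.
- have -> : (k.+1 <= p.+1 < 2 * p + 2)%N = false by apply/idP; lia.
  have -> : (k.+1 <= p < 2 * p + 2)%N = false by apply/idP; lia.
  by rewrite subrr.
Qed.

End PAB.

Section PB.
Import numFieldNormedType.Exports.
Variable R : realType.
Variable x : int -> R.
Hypothesis hinc : forall i, x i < x (i + 1).
Variables (p : nat).

Lemma poly_FTC (P : {poly R}) (a b : R) : a < b ->
  Rintegral lebesgue_measure `[a, b] (horner P^`()) = P.[b] - P.[a].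
Proof.
move=> ab.
have := @continuous_FTC2 R (horner P^`()) (horner P) a b ab.
rewrite /Rintegral => ->.
- by [].
- by apply: continuous_subspaceT => z; exact: continuous_horner.
- split.
  + by move=> z _; exact: derivable_horner.
  + by apply: cvg_at_right_filter; exact: continuous_horner.
  + by apply: cvg_at_left_filter; exact: continuous_horner.
- by move=> z _; rewrite -derivE.
Qed.

Lemma part_b_int g j :
  Rintegral lebesgue_measure `[x j, x (j + 1)] (i1 x p g) = g j.
Proof.
rewrite -(@Q_diff R x hinc p g j) -poly_FTC //.
set h := horner (@Q R x p g j)^`().
have hi : lebesgue_measure.-integrable `[x j, x (j + 1)] (EFin \o h).
  apply: continuous_compact_integrable; first exact: segment_compact.
  by apply: continuous_subspaceT => z; exact: continuous_horner.
have hi' : lebesgue_measure.-integrable `[x j, x (j + 1)[ (EFin \o h).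
  apply: integrableS hi => //; apply: subset_itvl; by rewrite bnd_simp.
have e1 : forall z, x j <= z < x (j + 1) -> i1 x p g z = h z.
  move=> z hz.
  by rewrite /i1 (@cellE R x hinc j z hz) /h Q_deriv.
rewrite -Rintegral_itv_bndo_bndc; last first.
  apply: eq_integrable hi' => //= z.
  by rewrite inE /= in_itv /= => hz; rewrite -(e1 z hz).
transitivity (\int[lebesgue_measure]_(z in `[x j, x (j + 1)[) h z).
  apply: eq_Rintegral => z; rewrite inE /= in_itv /= => hz; exact: e1.
by rewrite Rintegral_itv_bndo_bndc.
Qed.

End PB.

Theorem theorem2 (R : realType) (M : nat) (L : R) (x : int -> R) (p : nat) :
  periodic_grid M L x ->
  (* (a) *)
  (forall phi : R -> R, periodic_fun L phi -> H1loc phi ->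
     r0 x (i0 x p (r0 x phi)) = r0 x phi) /\
  (* (b) *)
  (forall psi : R -> R, periodic_fun L psi -> L2loc psi ->
     r1 x (i1 x p (r1 x psi)) = r1 x psi) /\
  (* (c) *)
  (forall f : int -> R, periodic_array M f ->
     forall (i : int) (y : R), x i <= y < x (i + 1) ->
       is_derive y 1 (i0_cell x p f i) (i1 x p (dd f) y) /\
       (x i < y -> is_derive y 1 (i0 x p f) (i1 x p (dd f) y))).
Proof.
case=> _ hinc _ _ _; split; [|split].
- by move=> phi _ _; exact: (@part_a R x hinc p phi).
- move=> psi _ _; apply/funext => j.
  exact: (@part_b_int R x hinc p (r1 x psi) j).
- move=> f _ i y hy; exact: (@part_c R x hinc p f i y hy).
Qed.
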